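(* Let $\Gamma$ be a distance-regular graph with diameter $D\ge 3$ and valency $k$. Let $\sigma_0,\sigma_1,\dots,\sigma_D$ and $\varepsilon,h$ be real numbers; write $\sigma=\sigma_1$. Then the following are equivalent. (i) $a_1\neq 0$; $\sigma_0,\dots,\sigma_D$ is a feasible pseudo cosine sequence of $\Gamma$, $\varepsilon$ is its auxiliary parameter, and $$h=\frac{(1-\sigma)(1-\sigma_2)}{(\sigma^2-\sigma_2)(1-\varepsilon\sigma)}.$$ (ii) $\sigma_0=1$, $\varepsilon\neq 1$, $\varepsilon\neq -1$, $$k=h\frac{\sigma-\varepsilon}{\sigma-1},$$ $$b_i=h\frac{(\sigma_{i-1}-\sigma\sigma_i)(\sigma_{i+1}-\varepsilon\sigma_i)}{(\sigma_{i-1}-\sigma_{i+1})(\sigma_{i+1}-\sigma_i)}\quad(1\le i\le D-1),$$ $$c_i=h\frac{(\sigma_{i+1}-\sigma\sigma_i)(\sigma_{i-1}-\varepsilon\sigma_i)}{(\sigma_{i+1}-\sigma_{i-1})(\sigma_{i-1}-\sigma_i)}\quad(1\le i\le D-1),$$ and all denominators in these three formulas are nonzero.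
   Context: $\Gamma$ is a finite connected undirected graph without loops or multiple edges, distance-regular with diameter $D$, intersection numbers $a_i,b_i,c_i$ ($c_0=0$, $b_D=0$, $c_1=1$), valency $k=b_0$, $c_i+a_i+b_i=k$. For $\theta\in\mathbb{R}$ the pseudo cosine sequence for $\theta$ is the sequence of reals $\sigma_0,\dots,\sigma_D$ with $\sigma_0=1$ and $c_i\sigma_{i-1}+a_i\sigma_i+b_i\sigma_{i+1}=\theta\sigma_i$ for $0\le i\le D-1$. It is nontrivial if $\sigma_1\ne 1$. Pseudo cosine sequences $\sigma_i$, $\rho_i$ form a tight pair if $(\sigma_i\rho_i)_{i=0}^D$ is a pseudo cosine sequence. For a tight pair of nontrivial pseudo cosine sequences, an auxiliary parameter is a real $\varepsilon$ with $\sigma_i\rho_i-\sigma_{i-1}\rho_{i-1}=\varepsilon(\sigma_{i-1}\rho_i-\sigma_i\rho_{i-1})$ for $1\le i\le D$. When $a_1\neq 0$: a nontrivial pseudo cosine sequence $\sigma_0,\dots,\sigma_D$ is tight if some nontrivial pseudo cosine sequence $\rho_0,\dots,\rho_D$ forms a tight pair with it, and its auxiliary parameter is the (uniquely determined) auxiliary parameter of that pair; a pseudo cosine sequence is feasible if it is tight and $\sigma_{i-1}\neq\sigma_{i+1}$ for $1\le i\le D-1$. *)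

(* Defs.v *)
From mathcomp Require Import all_boot all_order all_algebra.
Set Implicit Arguments. Unset Strict Implicit. Unset Printing Implicit Defensive.
Import Order.TTheory GRing.Theory Num.Theory.

Section Graph.
Variables (T : finType) (adj : rel T).

Fixpoint ball (x : T) (n : nat) : {set T} :=
  if n is m.+1 then ball x m :|: [set z | [exists w in ball x m, adj w z]]
  else [set x].

(* graph distance (equals #|T| if y is unreachable from x) *)
Definition dist (x y : T) : nat := find (fun n => y \in ball x n) (iota 0 #|T|).

Definition diameter : nat := \max_(x : T) \max_(y : T) dist x y.

Definition c_count (x y : T) : nat := #|[set z | adj y z & (dist x z).+1 == dist x y]|.
Definition a_count (x y : T) : nat := #|[set z | adj y z & dist x z == dist x y]|.
Definition b_count (x y : T) : nat := #|[set z | adj y z & dist x z == (dist x y).+1]|.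

(* The graph is distance-regular with intersection numbers a_i, b_i, c_i:
   these counts depend only on i = dist x y and equal a i, b i, c i. *)
Definition intersection_numbers (a b c : nat -> nat) : Prop :=
  forall x y : T,
    [/\ c_count x y = c (dist x y), a_count x y = a (dist x y)
      & b_count x y = b (dist x y)].

Definition simple_connected_graph : Prop :=
  [/\ symmetric adj, irreflexive adj & forall x y : T, connect adj x y].
End Graph.

Local Open Scope ring_scope.

Section Cosine.
Variables (R : realFieldType) (a b c : nat -> nat) (D : nat).

(* pseudo cosine sequence sigma_0..sigma_D for theta (only indices <= D matter) *)
Definition pseudo_cosine_for (theta : R) (s : nat -> R) : Prop :=
  s 0%N = 1 /\
  forall i : nat, (i < D)%N ->
    (c i)%:R * s i.-1 + (a i)%:R * s i + (b i)%:R * s i.+1 = theta * s i.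

Definition pseudo_cosine (s : nat -> R) : Prop := exists theta, pseudo_cosine_for theta s.

Definition nontrivial_pcs (s : nat -> R) : Prop := pseudo_cosine s /\ s 1%N != 1.

Definition tight_pair (s r : nat -> R) : Prop :=
  pseudo_cosine s /\ pseudo_cosine r /\ pseudo_cosine (fun i => s i * r i).

Definition aux_param_pair (s r : nat -> R) (eps : R) : Prop :=
  forall i : nat, (1 <= i <= D)%N ->
    s i * r i - s i.-1 * r i.-1 = eps * (s i.-1 * r i - s i * r i.-1).

Definition tight_pcs (s : nat -> R) : Prop :=
  nontrivial_pcs s /\ exists r, nontrivial_pcs r /\ tight_pair s r.

Definition aux_param (s : nat -> R) (eps : R) : Prop :=
  exists r, [/\ nontrivial_pcs r, tight_pair s r & aux_param_pair s r eps].

Definition feasible_pcs (s : nat -> R) : Prop :=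
  tight_pcs s /\ forall i : nat, (1 <= i <= D.-1)%N -> s i.-1 != s i.+1.
End Cosine.

(* Main.v *)
Require Import Defs.
From mathcomp Require Import all_boot all_order all_algebra.
Import Order.TTheory GRing.Theory Num.Theory.
Local Open Scope ring_scope.
From mathcomp Require Import ring lra zify.
Set Implicit Arguments. Unset Strict Implicit. Unset Printing Implicit Defensive.

Local Close Scope ring_scope.

Lemma ball_sub (T : finType) (adj : rel T) x m n :
  (m <= n)%N -> ball adj x m \subset ball adj x n.
Proof.
elim: n => [|n IH]; first by rewrite leqn0 => /eqP->.
rewrite leq_eqVlt => /orP[/eqP->//|/IH H].
apply: subset_trans H _; rewrite /=; exact: subsetUl.
Qed.

Lemma dist_le (T : finType) (adj : rel T) x y n :
  (n < #|T|)%N -> y \in ball adj x n -> (dist adj x y <= n)%N.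
Proof.
move=> Hn Hy; rewrite /dist; case: leqP => // Hlt.
have := before_find 0%N Hlt; rewrite nth_iota ?add0n ?Hy //.
Qed.

Lemma dist_bound (T : finType) (adj : rel T) x y : (dist adj x y <= #|T|)%N.
Proof. by rewrite /dist; have := find_size (fun n => y \in ball adj x n) (iota 0 #|T|); rewrite size_iota. Qed.

Lemma dist_ball (T : finType) (adj : rel T) x y :
  (dist adj x y < #|T|)%N -> y \in ball adj x (dist adj x y).
Proof.
move=> H; have: has (fun n => y \in ball adj x n) (iota 0 #|T|).
  by rewrite has_find size_iota.
move/(nth_find 0%N); rewrite nth_iota //.
Qed.

Lemma dist_notin (T : finType) (adj : rel T) x y n :
  (n < dist adj x y)%N -> y \notin ball adj x n.
Proof.
move=> H; have Hn : (n < #|T|)%N by apply: leq_trans H (dist_bound _ _ _).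
have := before_find 0%N H; rewrite nth_iota // add0n => ->; done.
Qed.

Lemma dist_xx (T : finType) (adj : rel T) x : dist adj x x = 0%N.
Proof.
apply/eqP; rewrite -leqn0; apply: dist_le; last by rewrite /= inE.
by apply/card_gt0P; exists x.
Qed.

Lemma dist0 (T : finType) (adj : rel T) x y : dist adj x y = 0%N -> y = x.
Proof.
move=> H; have : y \in ball adj x 0.
  rewrite -H; apply: dist_ball; rewrite H; by apply/card_gt0P; exists x.
by rewrite /= inE => /eqP.
Qed.

Lemma dist_adj (T : finType) (adj : rel T) x y z :
  adj y z -> (dist adj x z <= (dist adj x y).+1)%N.
Proof.
move=> Hyz; case: (ltnP (dist adj x y) #|T|) => Hd.
  have Hz : z \in ball adj x (dist adj x y).+1.
    rewrite /= inE; apply/orP; right; rewrite inE; apply/existsP; exists y.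
    by rewrite dist_ball.
  case: (ltnP (dist adj x y).+1 #|T|) => H2; first exact: dist_le.
  exact: leq_trans (dist_bound _ _ _) H2.
by apply: leq_trans (dist_bound _ _ _) _; apply: leq_trans Hd _.
Qed.

Lemma dist_down (T : finType) (adj : rel T) x y m :
  dist adj x y = m.+1 -> (m.+1 < #|T|)%N ->
  exists w, adj w y /\ dist adj x w = m.
Proof.
move=> Hd HN.
have Hlt : (dist adj x y < #|T|)%N by rewrite Hd.
have := dist_ball Hlt.
rewrite Hd /= inE => /orP[Hin|].
  by have := @dist_notin T adj x y m; rewrite Hd ltnSn Hin => /(_ isT).
rewrite inE => /existsP[w /andP[Hw Hwy]]; exists w; split => //.
have H1 := dist_le (ltnW HN) Hw.
have H2 := dist_adj x Hwy; rewrite Hd in H2.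
by apply/eqP; rewrite eqn_leq H1 -ltnS.
Qed.

Lemma path_dist (T : finType) (adj : rel T) x u p :
  path adj u p -> (dist adj x (last u p) <= dist adj x u + size p)%N.
Proof.
elim: p u => [|v p IH] u /=; first by rewrite addn0.
case/andP=> Huv Hp; apply: leq_trans (IH _ Hp) _.
by rewrite addnS -addSn leq_add2r dist_adj.
Qed.

Lemma dist_lt (T : finType) (adj : rel T) x y :
  connect adj x y -> (dist adj x y < #|T|)%N.
Proof.
case/connectP=> p Hp ->; case: (shortenP Hp) => p' Hp' Hu _.
apply: leq_ltn_trans (path_dist x Hp') _; rewrite dist_xx add0n.
have := card_uniqP Hu; rewrite /= => Hs.
have := max_card (mem (x :: p')); rewrite Hs /=; done.
Qed.

Lemma card_sum (T : finType) (P : pred T) :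
  #|[set z | P z]| = (\sum_(z : T) (P z : nat))%N.
Proof.
rewrite -sum1_card big_mkcond /=; apply: eq_bigr => z _; rewrite inE; by case: (P z).
Qed.

Lemma deg_split (T : finType) (adj : rel T) x y :
  symmetric adj ->
  (c_count adj x y + a_count adj x y + b_count adj x y = #|[set z | adj y z]|)%N.
Proof.
move=> Hsym; rewrite /c_count /a_count /b_count !card_sum -!big_split /=.
apply: eq_bigr => z _.
case Hyz: (adj y z) => //=.
have H1 := dist_adj x Hyz.
have H2 : (dist adj x y <= (dist adj x z).+1)%N by apply: dist_adj; rewrite Hsym.
move: H1 H2; set u := dist adj x y; set v := dist adj x z => H1 H2.
case: (v.+1 =P u) => E1; case: (v =P u) => E2; case: (v =P u.+1) => E3 //=; lia.
Qed.

Lemma deg_b0 (T : finType) (adj : rel T) y :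
  irreflexive adj -> b_count adj y y = #|[set z | adj y z]|.
Proof.
move=> Hirr; rewrite /b_count dist_xx; apply: eq_card => z; rewrite !inE.
case Hyz: (adj y z) => //=; apply/eqP.
have H := dist_adj y Hyz; rewrite dist_xx in H.
case: (dist adj y z) H (@dist0 T adj y z) => [|[|n]] //= _ H0.
by have := H0 erefl => Hzy; rewrite Hzy Hirr in Hyz.
Qed.

Lemma diam_attained (T : finType) (adj : rel T) D :
  D = diameter adj -> (0 < D)%N -> exists x w, dist adj x w = D.
Proof.
move=> HD HD0.
case: (pickP (fun _ : T => true)) => [x0 _|H]; last first.
  move: HD0; rewrite HD /diameter big_pred0 //.
have Hc : (0 < #|T|)%N by apply/card_gt0P; exists x0.
rewrite HD /diameter; case: (bigop.eq_bigmax (fun x => \max_(y : T) dist adj x y) Hc) => x ->.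
case: (bigop.eq_bigmax (fun y => dist adj x y) Hc) => y ->.
by exists x, y.
Qed.

Lemma graph_facts (T : finType) (adj : rel T) (a b c : nat -> nat) D :
  simple_connected_graph adj -> intersection_numbers adj a b c ->
  D = diameter adj -> (1 <= D)%N ->
  [/\ [/\ c 0%N = 0%N, a 0%N = 0%N & c 1%N = 1%N],
      (forall i, (i < D)%N -> (a i + b i + c i = b 0%N)%N),
      (forall i, (i < D)%N -> (0 < b i)%N)
    & (forall i, (1 <= i <= D)%N -> (0 < c i)%N)].
Proof.
move=> [Hsym Hirr Hcon] Hint HD HD1.
have [x0 [w Hw]] := diam_attained HD HD1.
have Hlt : forall y, (dist adj x0 y < #|T|)%N by move=> y; apply: dist_lt.
have exd : forall n, (n <= D)%N -> exists z, dist adj x0 z = n.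
  move=> n Hn; have [m Hm] : exists m, (n + m = D)%N by exists (D - n)%N; lia.
  elim: m n Hn Hm => [|m IH] n Hn Hm; first by exists w; rewrite Hw -Hm addn0.
  have [z Hz] := IH n.+1 ltac:(lia) ltac:(lia).
  have [w' [_ Hw']] := dist_down Hz ltac:(rewrite -Hz; exact: Hlt). by exists w'.
have down : forall i, (i < D)%N -> exists y z, [/\ adj y z, dist adj x0 y = i & dist adj x0 z = i.+1].
  move=> i Hi; have [z Hz] := exd i.+1 Hi.
  have [y [Hyz Hy]] := dist_down Hz ltac:(rewrite -Hz; exact: Hlt). by exists y, z.
have [x1 Hx1] := exd 1%N HD1.
have [Hc0 Ha0 _] := Hint x0 x0.
rewrite dist_xx in Hc0 Ha0.
split; first split.
- rewrite -Hc0 /c_count; apply/eqP; rewrite cards_eq0; apply/eqP/setP => z.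
  by rewrite !inE dist_xx andbF.
- rewrite -Ha0 /a_count; apply/eqP; rewrite cards_eq0; apply/eqP/setP => z.
  rewrite !inE dist_xx; apply/negbTE/negP => /andP[Hz /eqP/dist0 E].
  by rewrite E Hirr in Hz.
- have [Hc1 _ _] := Hint x0 x1; rewrite Hx1 in Hc1; rewrite -Hc1 /c_count Hx1.
  have [y [Hyx1 Hy]] := dist_down Hx1 ltac:(rewrite -Hx1; exact: Hlt).
  have Ey := dist0 Hy.
  apply: (etrans _ (cards1 x0)); apply: eq_card => z; rewrite !inE.
  apply/andP/eqP => [[_ /eqP[/dist0 ->]]//|->]; split; last by rewrite dist_xx.
  by rewrite Hsym -Ey.
- move=> i Hi; have [z Hz] := exd i (ltnW Hi).
  have [Hc Ha Hb] := Hint x0 z; rewrite Hz in Hc Ha Hb.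
  have [_ _ Hb0] := Hint z z; rewrite dist_xx in Hb0.
  rewrite -Hc -Ha -Hb -Hb0 deg_b0 // -(deg_split x0) //; lia.
- move=> i Hi; have [y [z [Hyz Hy Hz]]] := down i Hi.
  have [_ _ Hb] := Hint x0 y; rewrite Hy in Hb; rewrite -Hb /b_count.
  apply/card_gt0P; exists z; by rewrite !inE Hyz Hy Hz eqxx.
- move=> i /andP[Hi1 HiD]; case: i Hi1 HiD => // i _ HiD.
  have [y [z [Hyz Hy Hz]]] := down i HiD.
  have [Hc _ _] := Hint x0 z; rewrite Hz in Hc; rewrite -Hc /c_count.
  apply/card_gt0P; exists y; by rewrite !inE Hsym Hyz Hy Hz eqxx.
Qed.

Local Open Scope ring_scope.

Ltac nz := by repeat (apply/andP; split); try assumption.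

Lemma from0 (R : zmodType) (u v : R) : u - v = 0 -> u = v.
Proof. by move/eqP; rewrite subr_eq0 => /eqP. Qed.

Lemma to0 (R : zmodType) (u v : R) : u = v -> u - v = 0.
Proof. by move=> ->; rewrite subrr. Qed.

Lemma my_flip (R : zmodType) (u v : R) : u - v != 0 -> v - u != 0.
Proof. by rewrite -opprB oppr_eq0. Qed.




Lemma core (R : realFieldType) (x y z p q r cc aa bb k sg e tau : R) :
  aa = k - bb - cc ->
  cc * x + aa * y + bb * z = k * sg * y ->
  cc * p + aa * q + bb * r = k * tau * q ->
  y * q - x * p = e * (x * q - y * p) ->
  z * r - y * q = e * (y * r - z * q) ->
  tau * (sg - e) = 1 - e * sg ->
  q != 0 -> e != -1 ->
  cc * (x-y) * (z-x) * (sg-e) = k * (sg-1) * (x-e * y) * (z-sg * y) /\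
  bb * (z-y) * (x-z) * (sg-e) = k * (sg-1) * (x-sg * y) * (z-e * y).
Proof.
move=> /to0 Ha /to0 E1 /to0 E2 /to0 Ai /to0 Ai1 /to0 Ht Hq He.
have Hp : p * (x - e * y) - q * (y - e * x) = 0.
  have -> : p * (x - e * y) - q * (y - e * x) = - (y * q - x * p - e * (x * q - y * p)) by ring.
  by rewrite Ai oppr0.
have Hr : r * (z - e * y) - q * (y - e * z) = 0.
  have -> : r * (z - e * y) - q * (y - e * z) = (z * r - y * q - e * (y * r - z * q)) by ring.
  by rewrite Ai1.
have HG : q  *  ((1+e)  *  (cc * (y - x) * (z - e * y) * (sg - e) + bb * (y - z) * (x - e * y) * (sg - e) + k * (sg - 1) * (x - e * y) * (z - e * y))) = 0.
  have -> : q  *  ((1+e)  *  (cc * (y - x) * (z - e * y) * (sg - e) + bb * (y - z) * (x - e * y) * (sg - e) + k * (sg - 1) * (x - e * y) * (z - e * y))) = ((x - e * y) * (z - e * y) * (sg - e))  *  (cc * p + aa * q + bb * r - k * tau * q)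
     - cc * (z-e * y) * (sg-e)  *  (p * (x - e * y) - q * (y - e * x))
     - q * ((x - e * y) * (z - e * y) * (sg - e)) * (aa - (k - bb - cc))
     - bb * (x-e * y) * (sg-e)  *  (r * (z - e * y) - q * (y - e * z))
     + k * q * (x-e * y) * (z-e * y) * (tau * (sg - e) - (1 - e * sg)) by ring.
  by rewrite E2 Hp Ha Hr Ht; ring.
have He1 : 1 + e != 0.
  apply: contra He => /eqP H; apply/eqP; lra.
have {HG} HG : (cc * (y - x) * (z - e * y) * (sg - e) + bb * (y - z) * (x - e * y) * (sg - e) + k * (sg - 1) * (x - e * y) * (z - e * y)) = 0.
  by move/eqP: HG; rewrite !mulf_eq0 (negbTE Hq) (negbTE He1) /= => /eqP.
have E1' : cc * (x-y) + bb * (z-y) - k * (sg-1) * y = 0.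
  have -> : cc * (x-y) + bb * (z-y) - k * (sg-1) * y =
     (cc * x + aa * y + bb * z - k * sg * y) - y * (aa - (k - bb - cc)) by ring.
  by rewrite E1 Ha; ring.
split; apply: from0.
- have -> : cc * (x-y) * (z-x) * (sg-e) - k * (sg-1) * (x-e * y) * (z-sg * y) =
     - ((cc * (y - x) * (z - e * y) * (sg - e) + bb * (y - z) * (x - e * y) * (sg - e) + k * (sg - 1) * (x - e * y) * (z - e * y)) + (cc * (x-y) + bb * (z-y) - k * (sg-1) * y) * (x-e * y) * (sg-e)) by ring.
  by rewrite HG E1'; ring.
- have -> : bb * (z-y) * (x-z) * (sg-e) - k * (sg-1) * (x-sg * y) * (z-e * y) =
     (cc * (x-y) + bb * (z-y) - k * (sg-1) * y) * (sg-e) * (x-z) - (cc * (y - x) * (z - e * y) * (sg - e) + bb * (y - z) * (x - e * y) * (sg - e) + k * (sg - 1) * (x - e * y) * (z - e * y))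
       - (cc * (x-y) + bb * (z-y) - k * (sg-1) * y) * (x-e * y) * (sg-e) by ring.
  by rewrite HG E1'; ring.
Qed.
Lemma recS (R : fieldType) (x y z bb cc k h sg e : R) :
  bb = h * ((x - sg * y) * (z - e * y) / ((x - z) * (z - y))) ->
  cc = h * ((z - sg * y) * (x - e * y) / ((z - x) * (x - y))) ->
  k = h * ((sg - e) / (sg - 1)) ->
  x - z != 0 -> z - y != 0 -> z - x != 0 -> x - y != 0 -> sg - 1 != 0 ->
  cc * x + (k - bb - cc) * y + bb * z = k * sg * y.
Proof. move=> -> -> -> H1 H2 H3 H4 H5; field; nz. Qed.

Lemma recR (R : fieldType) (x y z p q r bb cc k h sg e tau : R) :
  bb = h * ((x - sg * y) * (z - e * y) / ((x - z) * (z - y))) ->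
  cc = h * ((z - sg * y) * (x - e * y) / ((z - x) * (x - y))) ->
  k = h * ((sg - e) / (sg - 1)) ->
  q = p * ((x - e * y) / (y - e * x)) ->
  r = q * ((y - e * z) / (z - e * y)) ->
  tau = (1 - e * sg) / (sg - e) ->
  x - z != 0 -> z - y != 0 -> z - x != 0 -> x - y != 0 -> sg - 1 != 0 ->
  y - e * x != 0 -> z - e * y != 0 -> sg - e != 0 ->
  cc * p + (k - bb - cc) * q + bb * r = k * tau * q.
Proof.
move=> -> -> -> -> -> -> H1 H2 H3 H4 H5 H6 H7 H8; field; nz.
Qed.

Lemma recP (R : fieldType) (x y z p q r bb cc k h sg e tau : R) :
  bb = h * ((x - sg * y) * (z - e * y) / ((x - z) * (z - y))) ->
  cc = h * ((z - sg * y) * (x - e * y) / ((z - x) * (x - y))) ->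
  k = h * ((sg - e) / (sg - 1)) ->
  q = p * ((x - e * y) / (y - e * x)) ->
  r = q * ((y - e * z) / (z - e * y)) ->
  tau = (1 - e * sg) / (sg - e) ->
  x - z != 0 -> z - y != 0 -> z - x != 0 -> x - y != 0 -> sg - 1 != 0 ->
  y - e * x != 0 -> z - e * y != 0 -> sg - e != 0 ->
  cc * (x * p) + (k - bb - cc) * (y * q) + bb * (z * r) = k * (sg * tau) * (y * q).
Proof.
move=> -> -> -> -> -> -> H1 H2 H3 H4 H5 H6 H7 H8; field; nz.
Qed.

Lemma auxL (R : fieldType) (x y p q e : R) :
  q = p * ((x - e * y) / (y - e * x)) -> y - e * x != 0 ->
  y * q - x * p = e * (x * q - y * p).
Proof. move=> -> H; field; nz. Qed.

Lemma a1L (R : fieldType) (sg t bb cc k h e : R) :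
  bb = h * ((1 - sg * sg) * (t - e * sg) / ((1 - t) * (t - sg))) ->
  cc = h * ((t - sg * sg) * (1 - e * sg) / ((t - 1) * (1 - sg))) ->
  k = h * ((sg - e) / (sg - 1)) ->
  1 - t != 0 -> t - sg != 0 -> t - 1 != 0 -> 1 - sg != 0 -> sg - 1 != 0 ->
  (k - bb - cc) * ((sg - 1) * (1 - t) * (t - sg)) = - h * (1 - e) * (1 + sg) * (t - 1) * (t - sg * sg).
Proof.
move=> -> -> -> H1 H2 H3 H4 H5; field; nz.
Qed.

Lemma hL (R : fieldType) (sg t h e : R) :
  1 = h * ((t - sg * sg) * (1 - e * sg) / ((t - 1) * (1 - sg))) ->
  t - sg * sg != 0 -> 1 - e * sg != 0 -> t - 1 != 0 -> 1 - sg != 0 ->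
  h = (1 - sg) * (1 - t) / ((sg ^+ 2 - t) * (1 - e * sg)).
Proof.
move=> E H1 H2 H3 H4.
have H5 : sg ^+ 2 - t != 0 by rewrite expr2; apply: my_flip.
transitivity (h * ((t - sg * sg) * (1 - e * sg) / ((t - 1) * (1 - sg))) *
   ((1 - sg) * (1 - t) / ((sg ^+ 2 - t) * (1 - e * sg)))).
  field; nz.
by rewrite -E mul1r.
Qed.

Lemma solveL (R : fieldType) (u v w : R) : u * w = v -> w != 0 -> u = v / w.
Proof. by move=> <- H; rewrite mulfK. Qed.

Lemma kL (R : fieldType) (sg t h e k : R) :
  (1 - sg) * (t - 1) * (sg - e) = k * (sg - 1) * (1 - e * sg) * (t - sg * sg) ->
  h = (1 - sg) * (1 - t) / ((sg ^+ 2 - t) * (1 - e * sg)) ->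
  sg - 1 != 0 -> t - 1 != 0 -> sg - e != 0 ->
  [/\ 1 - e * sg != 0, t - sg * sg != 0 & k = h * ((sg - e) / (sg - 1))].
Proof.
move=> E Hh H1 H2 H3.
have NZ : k * (sg - 1) * (1 - e * sg) * (t - sg * sg) != 0.
  rewrite -E !mulf_neq0 //; exact: my_flip.
move: (NZ); rewrite !mulf_eq0 !negb_or => /andP[/andP[/andP[Hk _] H4] H5].
split => //.
have H6 : sg ^+ 2 - t != 0 by rewrite expr2; apply: my_flip.
have H7 : 1 - sg != 0 by apply: my_flip.
rewrite Hh (solveL (w := (sg - 1) * (1 - e * sg) * (t - sg * sg)) (u := k) (v := (1 - sg) * (t - 1) * (sg - e))).
- field; nz.
- by rewrite E; ring.
- by rewrite !mulf_neq0.
Qed.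

Lemma my_formB (R : fieldType) (x y z bb k h sg e : R) :
  bb * (z - y) * (x - z) * (sg - e) = k * (sg - 1) * (x - sg * y) * (z - e * y) ->
  k = h * ((sg - e) / (sg - 1)) ->
  z - y != 0 -> x - z != 0 -> sg - e != 0 -> sg - 1 != 0 ->
  bb = h * ((x - sg * y) * (z - e * y) / ((x - z) * (z - y))).
Proof.
move=> E Hk H1 H2 H3 H4.
have E' : bb * ((z - y) * (x - z) * (sg - e)) = k * (sg - 1) * (x - sg * y) * (z - e * y) by rewrite -E; ring.
rewrite (solveL E'); last by rewrite !mulf_neq0.
rewrite Hk; field; nz.
Qed.

Lemma my_formC (R : fieldType) (x y z cc k h sg e : R) :
  cc * (x - y) * (z - x) * (sg - e) = k * (sg - 1) * (x - e * y) * (z - sg * y) ->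
  k = h * ((sg - e) / (sg - 1)) ->
  x - y != 0 -> z - x != 0 -> sg - e != 0 -> sg - 1 != 0 ->
  cc = h * ((z - sg * y) * (x - e * y) / ((z - x) * (x - y))).
Proof.
move=> E Hk H1 H2 H3 H4.
have E' : cc * ((x - y) * (z - x) * (sg - e)) = k * (sg - 1) * (x - e * y) * (z - sg * y) by rewrite -E; ring.
rewrite (solveL E'); last by rewrite !mulf_neq0.
rewrite Hk; field; nz.
Qed.

Lemma neqxy (R : fieldType) (x y z bb cc aa k sg e : R) :
  aa = k - bb - cc -> cc * x + aa * y + bb * z = k * sg * y ->
  cc * (x - y) * (z - x) * (sg - e) = k * (sg - 1) * (x - e * y) * (z - sg * y) ->
  bb * (z - y) * (x - z) * (sg - e) = k * (sg - 1) * (x - sg * y) * (z - e * y) ->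
  x - z != 0 -> k != 0 -> sg - 1 != 0 -> sg - e != 0 -> 1 - e != 0 ->
  bb != 0 -> cc != 0 -> bb != k -> cc != k ->
  x - y != 0 /\ z - y != 0.
Proof.
move=> Ha Hr Hc Hb Hxz Hk Hs1 Hse He1 Hb0 Hc0 Hbk Hck.
have Hk1 : k * (sg - 1) != 0 by rewrite mulf_neq0.
split; apply/negP => /eqP/from0 Exy; subst y.
- have E : k * (sg - 1) * ((1 - e) * (x * (z - sg * x))) = 0.
    transitivity (cc * (x - x) * (z - x) * (sg - e)); first by rewrite Hc; ring.
    by rewrite subrr; ring.
  move/eqP: E; rewrite mulf_eq0 (negbTE Hk1) /= mulf_eq0 (negbTE He1) /= mulf_eq0.
  case/orP => [/eqP Ex | /eqP/from0 Ez].
  + subst x; move: Hr; rewrite !mulr0 !add0r => /eqP; rewrite mulf_eq0 (negbTE Hb0) /=.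
    by move=> /eqP Ez; move: Hxz; rewrite Ez subrr eqxx.
  + subst z.
    have E : (bb - k) * (x * x * ((sg - 1) * (sg - 1)) * (sg - e)) = 0.
      transitivity (k * (sg - 1) * (x - sg * x) * (sg * x - e * x) - bb * (sg * x - x) * (x - sg * x) * (sg - e)); first by ring.
      by rewrite Hb subrr.
    have Hx : x != 0 by apply: contra Hxz => /eqP ->; rewrite mulr0 subrr.
    have HX : x * x * ((sg - 1) * (sg - 1)) * (sg - e) != 0 by rewrite !mulf_neq0.
    by move/eqP: E; rewrite mulf_eq0 (negbTE HX) orbF subr_eq0 (negbTE Hbk).
- have E : k * (sg - 1) * ((1 - e) * (z * (x - sg * z))) = 0.
    transitivity (bb * (z - z) * (x - z) * (sg - e)); first by rewrite Hb; ring.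
    by rewrite subrr; ring.
  move/eqP: E; rewrite mulf_eq0 (negbTE Hk1) /= mulf_eq0 (negbTE He1) /= mulf_eq0.
  case/orP => [/eqP Ez | /eqP/from0 Ex].
  + subst z; move: Hr; rewrite !mulr0 !addr0 => /eqP; rewrite mulf_eq0 (negbTE Hc0) /=.
    by move=> /eqP Ex; move: Hxz; rewrite Ex subrr eqxx.
  + subst x.
    have E : (cc - k) * (z * z * ((sg - 1) * (sg - 1)) * (sg - e)) = 0.
      transitivity (k * (sg - 1) * (sg * z - e * z) * (z - sg * z) - cc * (sg * z - z) * (z - sg * z) * (sg - e)); first by ring.
      by rewrite Hc subrr.
    have Hz : z != 0 by apply: contra Hxz => /eqP ->; rewrite mulr0 subrr.
    have HX : z * z * ((sg - 1) * (sg - 1)) * (sg - e) != 0 by rewrite !mulf_neq0.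
    by move/eqP: E; rewrite mulf_eq0 (negbTE HX) orbF subr_eq0 (negbTE Hck).
Qed.

Lemma pcs_rec (R : realFieldType) (a b c : nat -> nat) D (s : nat -> R) :
  (0 < D)%N -> c 0%N = 0%N -> a 0%N = 0%N -> pseudo_cosine a b c D s ->
  s 0%N = 1 /\ forall i, (i < D)%N ->
   (c i)%:R * s i.-1 + (a i)%:R * s i + (b i)%:R * s i.+1 = (b 0%N)%:R * s 1%N * s i.
Proof.
move=> HD Hc0 Ha0 [th [H0 H]]; split => // i Hi.
have := H 0%N HD; rewrite /= Hc0 Ha0 H0 !mul0r !add0r mulr1 => Eth.
by rewrite H // -Eth.
Qed.

Lemma rec_pcs (R : realFieldType) (a b c : nat -> nat) D (s : nat -> R) :
  s 0%N = 1 -> c 0%N = 0%N -> a 0%N = 0%N ->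
  (forall i, (0 < i)%N -> (i < D)%N ->
   (c i)%:R * s i.-1 + (a i)%:R * s i + (b i)%:R * s i.+1 = (b 0%N)%:R * s 1%N * s i) ->
  pseudo_cosine a b c D s.
Proof.
move=> H0 Hc0 Ha0 H; exists ((b 0%N)%:R * s 1%N); split => // [[|i]] Hi.
- by rewrite /= Hc0 Ha0 H0 !mul0r !add0r mulr1.
- exact: H.
Qed.

Lemma neq_k (R : realFieldType) (aa bb cc k : R) :
  aa = k - bb - cc -> 1 <= cc -> 0 <= aa -> bb != k.
Proof. move=> H1 H2 H3; apply/eqP => E; lra. Qed.

Lemma ge1_nz (R : realFieldType) (x : R) : 1 <= x -> x != 0.
Proof. move=> H; apply/eqP => E; rewrite E in H; lra. Qed.

Fixpoint rho (R : fieldType) (s : nat -> R) (e : R) (n : nat) : R :=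
  if n is m.+1 then rho s e m * ((s m - e * s m.+1) / (s m.+1 - e * s m)) else 1.


Lemma eq_via (R : comNzRingType) (al L1 R1 L2 R2 : R) :
  L1 - R1 = al * (L2 - R2) -> L2 = R2 -> L1 = R1.
Proof. by move=> E H; apply: from0; rewrite E H subrr mulr0. Qed.

Lemma step_t (R : realFieldType) (A B t : R) : 0 < A -> 1 <= B -> B * t = B + 2 * A -> 1 < t.
Proof. move=> *; nra. Qed.

Lemma contra_a (R : realFieldType) (A B t r2 : R) :
  0 < A -> 1 <= B -> 1 < t -> B * r2 = B * t -> B * (t * r2) = B -> False.
Proof.
move=> HA HB Ht E1 E2.
have Hr : r2 = t.
  apply: (mulfI (x := B)); first by apply/eqP => E; rewrite E in HB; lra.
  exact: E1.
rewrite Hr in E2.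
have HB0 : B != 0 by apply/eqP => E; rewrite E in HB; lra.
have : B * (t * t - 1) == 0 by apply/eqP; apply: (eq_via (al := 1) _ E2); ring.
rewrite mulf_eq0 (negbTE HB0) /= => /eqP H; nra.
Qed.

Lemma contra_b (R : realFieldType) (A1 B1 C2 A2 B2 k t r1 r3 s3 : R) :
  0 <= A2 -> 1 <= C2 -> 1 <= B2 -> 1 < t -> r1 != 1 ->
  A1 = k - B1 - 1 -> A2 = k - B2 - C2 ->
  1 + A1 * r1 + B1 * r1 = k * r1 * r1 ->
  C2 * r1 + A2 * r1 + B2 * r3 = k * r1 * r1 ->
  (s3 + t) * (r3 - r1) = 0 ->
  - C2 + A2 * t + B2 * s3 = - (k * t) -> False.
Proof.
move=> HA2 HC2 HB2 Ht Hr1 E1 E2 R1 R2 X S2.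
have H1 : (r1 - 1) * (k * r1 + 1) = 0.
  apply: (eq_via (al := -1) _ R1); rewrite E1; ring.
have Hk : k * r1 = -1.
  move/eqP: H1; rewrite mulf_eq0 subr_eq0 (negbTE Hr1) /= => /eqP H.
  by apply: from0; rewrite opprK.
have H2 : B2 * (r3 - r1) = k * r1 * (r1 - 1).
  by apply: (eq_via (al := 1) _ R2); rewrite E2; ring.
rewrite Hk in H2.
have Hr3 : r3 - r1 != 0.
  apply/eqP => E; rewrite E mulr0 in H2.
  move/eqP: H2; rewrite eq_sym mulf_eq0 oppr_eq0 oner_eq0 /= subr_eq0.
  by rewrite (negbTE Hr1).
have Hs3 : s3 = - t.
  move/eqP: X; rewrite mulf_eq0 (negbTE Hr3) orbF => /eqP H.
  by apply: from0; rewrite opprK.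
rewrite Hs3 E2 in S2; nra.
Qed.

Lemma no_m1 (R : realFieldType) (a b c : nat -> nat) D (s r : nat -> R) (e : R) :
  (3 <= D)%N -> c 0%N = 0%N -> a 0%N = 0%N -> c 1%N = 1%N -> a 1%N != 0%N ->
  (forall i, (i < D)%N -> (a i)%:R = (b 0%N)%:R - (b i)%:R - (c i)%:R :> R) ->
  (forall i, (i < D)%N -> 1 <= (b i)%:R :> R) ->
  (forall i, (1 <= i <= D)%N -> 1 <= (c i)%:R :> R) ->
  pseudo_cosine a b c D s -> pseudo_cosine a b c D r ->
  pseudo_cosine a b c D (fun i => s i * r i) ->
  aux_param_pair D s r e -> r 1%N != 1 -> s 1%N = -1 -> False.
Proof.
move=> HD3 Hc0 Ha0 Hc1 Ha1 HsumR Hb1 Hc1R Hs Hr Hp Haux Hr1 Hm.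
have HD0 : (0 < D)%N by lia.
have HD1 : (1 < D)%N by lia.
have HD2 : (2 < D)%N by lia.
have HD11 : (1 <= 1 <= D)%N by lia.
have HD22 : (1 <= 2 <= D)%N by lia.
have HD33 : (1 <= 3 <= D)%N by lia.
have [Hs0 Rs] := pcs_rec HD0 Hc0 Ha0 Hs.
have [Hr0 Rr] := pcs_rec HD0 Hc0 Ha0 Hr.
have [_ Rp] := pcs_rec HD0 Hc0 Ha0 Hp.
have A1pos : 0 < (a 1%N)%:R :> R by rewrite ltr0n lt0n.
have HA1 := HsumR 1%N HD1; rewrite Hc1 in HA1.
have Rs1 := Rs 1%N HD1; rewrite /= Hs0 Hm Hc1 in Rs1.
have Et : (b 1%N)%:R * s 2%N = (b 1%N)%:R + 2 * (a 1%N)%:R.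
  by apply: (eq_via (al := 1) _ Rs1); rewrite HA1; ring.
have Ht := step_t A1pos (Hb1 1%N HD1) Et.
have aux1 := Haux 1%N HD11; rewrite /= Hs0 Hr0 Hm in aux1.
have X : (r 1%N + 1) * (1 + e) = 0 by apply: (eq_via (al := -1) _ aux1); ring.
move/eqP: X; rewrite mulf_eq0 => /orP[/eqP X | /eqP X].
  have Hr1' : r 1%N = -1 by apply: from0; rewrite opprK.
  have Rr1 := Rr 1%N HD1; rewrite /= Hr0 Hc1 Hr1' in Rr1.
  have Rp1 := Rp 1%N HD1; rewrite /= Hs0 Hr0 Hm Hr1' Hc1 in Rp1.
  apply: (contra_a A1pos (Hb1 1%N HD1) Ht (r2 := r 2%N)).
    by rewrite Et; apply: (eq_via (al := 1) _ Rr1); rewrite HA1; ring.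
  by apply: (eq_via (al := 1) _ Rp1); rewrite HA1; ring.
have He : e = -1 by apply: from0; rewrite opprK addrC.
have aux2 := Haux 2%N HD22; rewrite /= Hm He in aux2.
have X2 : (s 2%N - 1) * (r 2%N - r 1%N) = 0 by apply: (eq_via (al := 1) _ aux2); ring.
have Ht1 : s 2%N - 1 != 0 by rewrite subr_eq0; apply/eqP => E; rewrite E ltxx in Ht.
have Hr2 : r 2%N = r 1%N.
  by move/eqP: X2; rewrite mulf_eq0 (negbTE Ht1) /= subr_eq0 => /eqP.
have Rr1 := Rr 1%N HD1; rewrite /= Hr0 Hc1 Hr2 in Rr1.
have Rr2 := Rr 2%N HD2; rewrite /= Hr2 in Rr2.
have aux3 := Haux 3%N HD33; rewrite /= He Hr2 in aux3.
have X3 : (s 3%N + s 2%N) * (r 3%N - r 1%N) = 0 by apply: (eq_via (al := 1) _ aux3); ring.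
have Rs2 := Rs 2%N HD2; rewrite /= Hm in Rs2.
apply: (contra_b (A1 := (a 1%N)%:R) (B1 := (b 1%N)%:R) (k := (b 0%N)%:R) _ _ _ Ht Hr1 HA1 (HsumR 2%N HD2) _ Rr2 X3).
- by rewrite ler0n.
- exact: Hc1R.
- exact: Hb1.
- by apply: (eq_via (al := 1) _ Rr1); ring.
- by apply: (eq_via (al := 1) _ Rs2); ring.
Qed.

Lemma pcs_ext (R : realFieldType) (a b c : nat -> nat) D (f g : nat -> R) :
  (forall i, f i = g i) -> pseudo_cosine a b c D f -> pseudo_cosine a b c D g.
Proof.
move=> E [th [H0 H]]; exists th; split; first by rewrite -E.
by move=> i Hi; rewrite -!E; apply: H.
Qed.

Lemma idx (i D : nat) : (1 <= i <= D.-1)%N ->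
  [/\ (1 <= i)%N, (i < D)%N, (1 <= i <= D)%N & (1 <= i.+1 <= D)%N].
Proof. move=> H; split; lia. Qed.

Lemma idx1 (m D : nat) : (m.+1 < D)%N -> (1 <= m.+1 <= D)%N.
Proof. lia. Qed.
Lemma idx2 (m D : nat) : (m.+1 < D)%N -> (1 <= m.+2 <= D)%N.
Proof. lia. Qed.
Lemma idx3 (m D : nat) : (m.+1 < D)%N -> (1 <= m.+1 <= D.-1)%N.
Proof. lia. Qed.

Unset Implicit Arguments.

Theorem theorem15p2 (R : realFieldType) (T : finType) (adj : rel T)
    (a b c : nat -> nat) (D : nat) (s : nat -> R) (eps h : R) :
  simple_connected_graph adj ->
  intersection_numbers adj a b c ->
  D = diameter adj ->
  (3 <= D)%N ->
  let k : R := (b 0%N)%:R in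
  let sg := s 1%N in
  ( [/\ a 1%N != 0%N,
        feasible_pcs a b c D s,
        aux_param a b c D s eps
      & h = (1 - sg) * (1 - s 2%N) / ((sg ^+ 2 - s 2%N) * (1 - eps * sg))]
  <->
    [/\ s 0%N = 1, eps != 1, eps != -1,
        (sg - 1 != 0 /\ k = h * ((sg - eps) / (sg - 1)))
      & forall i : nat, (1 <= i <= D.-1)%N ->
          [/\ (s i.-1 - s i.+1 != 0 /\ s i.+1 - s i != 0),
              (s i.+1 - s i.-1 != 0 /\ s i.-1 - s i != 0),
              (b i)%:R = h * ((s i.-1 - sg * s i) * (s i.+1 - eps * s i)
                              / ((s i.-1 - s i.+1) * (s i.+1 - s i)))
            & (c i)%:R = h * ((s i.+1 - sg * s i) * (s i.-1 - eps * s i)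
                              / ((s i.+1 - s i.-1) * (s i.-1 - s i)))]
      ] ).
Proof.
move=> Hg Hint HD HD3 k sg; subst k sg.
have [[Hc0 Ha0 Hc1] Hsum Hbpos Hcpos] := graph_facts Hg Hint HD ltac:(lia).
have HD0 : (0 < D)%N by lia.
have HD1 : (1 <= 1 <= D.-1)%N by lia.
have HD2 : (1 < D)%N by lia.
have HD2' : (2 < D)%N by lia.
have HD11 : (1 <= 1 <= D)%N by lia.
have HsumR : forall i, (i < D)%N -> (a i)%:R = (b 0%N)%:R - (b i)%:R - (c i)%:R :> R.
  by move=> i Hi; rewrite -(Hsum i Hi) !natrD; ring.
have Hb1 : forall i, (i < D)%N -> 1 <= (b i)%:R :> R by move=> i Hi; rewrite ler1n Hbpos.
have Hc1R : forall i, (1 <= i <= D)%N -> 1 <= (c i)%:R :> R by move=> i Hi; rewrite ler1n Hcpos.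
have Ha0R : forall i, 0 <= (a i)%:R :> R by move=> i; rewrite ler0n.
have Hk1 : 1 <= (b 0%N)%:R :> R by apply: Hb1.
have Hk0 : (b 0%N)%:R != 0 :> R by apply: ge1_nz.
have Hbnz : forall i, (i < D)%N -> (b i)%:R != 0 :> R.
  by move=> i Hi; apply: ge1_nz; apply: Hb1.
have Hcnz : forall i, (1 <= i <= D)%N -> (c i)%:R != 0 :> R.
  by move=> i Hi; apply: ge1_nz; apply: Hc1R.
have Hbk : forall i, (1 <= i)%N -> (i < D)%N -> (b i)%:R != (b 0%N)%:R :> R.
  move=> i H1 H2; apply: (neq_k (HsumR i H2)); [apply: Hc1R; lia | exact: Ha0R].
have Hck : forall i, (1 <= i)%N -> (i < D)%N -> (c i)%:R != (b 0%N)%:R :> R.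
  move=> i H1 H2; apply: (neq_k (aa := (a i)%:R) (bb := (c i)%:R) (cc := (b i)%:R));
    [by rewrite HsumR //; ring | exact: Hb1 | exact: Ha0R].
split.
  case=> Ha1 [[[Hspcs Hs1] _] Hfeas] [r [[Hrpcs Hr1] [_ [_ Hppcs]] Haux]] Hh.
  have [Hs0 Rs] := pcs_rec HD0 Hc0 Ha0 Hspcs.
  have [Hr0 Rr] := pcs_rec HD0 Hc0 Ha0 Hrpcs.
  have Hsm : s 1%N != -1.
    apply/negP => /eqP Hm.
    exact: (no_m1 HD3 Hc0 Ha0 Hc1 Ha1 HsumR Hb1 Hc1R Hspcs Hrpcs Hppcs Haux Hr1 Hm).
  have Hrm : r 1%N != -1.
    apply/negP => /eqP Hm.
    apply: (no_m1 (s := r) (r := s) (e := - eps) HD3 Hc0 Ha0 Hc1 Ha1 HsumR Hb1 Hc1R Hrpcs Hspcs _ _ Hs1 Hm).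
    - by apply: (pcs_ext _ Hppcs) => i; rewrite mulrC.
    - by move=> i Hi; apply: (eq_via (al := 1) _ (Haux i Hi)); ring.
  have aux1 := Haux 1%N HD11; rewrite /= Hs0 Hr0 in aux1.
  have He1 : eps != 1.
    apply/eqP => He; rewrite He in aux1.
    have : (s 1%N - 1) * (r 1%N + 1) == 0 by apply/eqP; apply: (eq_via (al := 1) _ aux1); ring.
    rewrite mulf_eq0 => /orP[/eqP H|/eqP H].
    + by move: Hs1; rewrite (from0 H) eqxx.
    + by move: Hrm; rewrite (_ : r 1%N = -1) ?eqxx //; apply: from0; rewrite opprK.
  have He2 : eps != -1.
    apply/eqP => He; rewrite He in aux1.
    have : (s 1%N + 1) * (r 1%N - 1) == 0 by apply/eqP; apply: (eq_via (al := 1) _ aux1); ring.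
    rewrite mulf_eq0 => /orP[/eqP H|/eqP H].
    + by move: Hsm; rewrite (_ : s 1%N = -1) ?eqxx //; apply: from0; rewrite opprK.
    + by move: Hr1; rewrite (from0 H) eqxx.
  have Hse : s 1%N - eps != 0.
    apply/eqP => H; rewrite -(from0 H) in aux1.
    have : (s 1%N - 1) * (s 1%N + 1) == 0 by apply/eqP; apply: (eq_via (al := 1) _ aux1); ring.
    rewrite mulf_eq0 => /orP[/eqP H'|/eqP H'].
    + by move: Hs1; rewrite (from0 H') eqxx.
    + by move: Hsm; rewrite (_ : s 1%N = -1) ?eqxx //; apply: from0; rewrite opprK.
  have Htau : r 1%N * (s 1%N - eps) = 1 - eps * s 1%N.
    by apply: (eq_via (al := 1) _ aux1); ring.
  have He1' : 1 - eps != 0 by rewrite subr_eq0 eq_sym.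
  have Hrnz : forall i, (i < D)%N -> r i != 0.
    elim=> [|m IH] Hm; first by rewrite Hr0 oner_eq0.
    have Hp := IH (ltnW Hm).
    apply/eqP => Hq.
    have A1 := Haux m.+1 (idx1 Hm); rewrite /= Hq in A1.
    have X1 : r m * (s m - eps * s m.+1) = 0 by apply: (eq_via (al := -1) _ A1); ring.
    have Ex : s m = eps * s m.+1.
      by move/eqP: X1; rewrite mulf_eq0 (negbTE Hp) /= subr_eq0 => /eqP.
    have R1 := Rr m.+1 Hm; rewrite /= Hq in R1.
    have A2 := Haux m.+2 (idx2 Hm); rewrite /= Hq in A2.
    have X2 : r m.+2 * (s m.+2 - eps * s m.+1) = 0 by apply: (eq_via (al := 1) _ A2); ring.
    move/eqP: X2; rewrite mulf_eq0 => /orP[/eqP Hr2|/eqP Hz].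
      rewrite Hr2 in R1.
      have : (c m.+1)%:R * r m == 0 by apply/eqP; apply: (eq_via (al := 1) _ R1); ring.
      by rewrite mulf_eq0 (negbTE Hp) orbF (negbTE (Hcnz m.+1 (idx1 Hm))).
    have := Hfeas m.+1 (idx3 Hm); rewrite /= Ex (from0 Hz) eqxx //.
  have key : forall i, (1 <= i <= D.-1)%N ->
     (c i)%:R * (s i.-1 - s i) * (s i.+1 - s i.-1) * (s 1%N - eps) =
       (b 0%N)%:R * (s 1%N - 1) * (s i.-1 - eps * s i) * (s i.+1 - s 1%N * s i) /\
     (b i)%:R * (s i.+1 - s i) * (s i.-1 - s i.+1) * (s 1%N - eps) =
       (b 0%N)%:R * (s 1%N - 1) * (s i.-1 - s 1%N * s i) * (s i.+1 - eps * s i).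
    move=> i Hi; have [_ H1 H2 H3] := idx Hi.
    have A1 := Haux i H2; have A2 := Haux i.+1 H3; rewrite /= in A2.
    exact: (core (HsumR i H1) (Rs i H1) (Rr i H1) A1 A2 Htau (Hrnz i H1) He2).
  have [Kc1 _] := key 1%N HD1; rewrite /= Hs0 Hc1 in Kc1.
  have Kc' : (1 - s 1%N) * (s 2%N - 1) * (s 1%N - eps) =
      (b 0%N)%:R * (s 1%N - 1) * (1 - eps * s 1%N) * (s 2%N - s 1%N * s 1%N).
    by apply: (eq_via (al := 1) _ Kc1); ring.
  have Hsg1 : s 1%N - 1 != 0 by rewrite subr_eq0.
  have Ht1 : s 2%N - 1 != 0.
    by have := Hfeas 1%N HD1; rewrite /= Hs0 subr_eq0 eq_sym.
  have [Hes Hts Hk] := kL Kc' Hh Hsg1 Ht1 Hse.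
  split => //.
  move=> i Hi; have [Hi1 H1 H2 H3] := idx Hi.
  have [Kc Kb] := key i Hi.
  have Hxz : s i.-1 - s i.+1 != 0 by rewrite subr_eq0 Hfeas.
  have [Hxy Hzy] := neqxy (HsumR i H1) (Rs i H1) Kc Kb Hxz Hk0 Hsg1 Hse He1'
     (Hbnz i H1) (Hcnz i H2) (Hbk i Hi1 H1) (Hck i Hi1 H1).
  split; [by split | by split => //; apply: my_flip | | ].
  + exact: (my_formB Kb Hk Hzy Hxz Hse Hsg1).
  + exact: (my_formC Kc Hk Hxy (my_flip Hxz) Hse Hsg1).
case=> Hs0 He1 He2 [Hsg1 Hk] Hform.
have : h * ((s 1%N - eps) / (s 1%N - 1)) != 0 by rewrite -Hk.
rewrite !mulf_eq0 !negb_or => /andP[Hh0 /andP[Hse _]].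
have nzs : forall i, (1 <= i <= D.-1)%N ->
   [/\ s i.-1 - s 1%N * s i != 0, s i.+1 - eps * s i != 0,
       s i.+1 - s 1%N * s i != 0 & s i.-1 - eps * s i != 0].
  move=> i Hi; have [_ _ Hbf Hcf] := Hform i Hi.
  have HB := Hbnz i ltac:(lia); have HC := Hcnz i ltac:(lia).
  rewrite Hbf !mulf_eq0 !negb_or in HB; rewrite Hcf !mulf_eq0 !negb_or in HC.
  move/andP: HB => [_ /andP[/andP[H1 H2] _]].
  move/andP: HC => [_ /andP[/andP[H3 H4] _]].
  by split.
have Bden : forall i, (1 <= i <= D)%N -> s i - eps * s i.-1 != 0.
  case=> [//|[|m]] Hi; first by rewrite /= Hs0 mulr1.
  by have [_ H _ _] := nzs m.+1 ltac:(lia).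
have Hrho1 : rho s eps 1 = (1 - eps * s 1%N) / (s 1%N - eps) by rewrite /= Hs0 mul1r mulr1.
have pcsS : pseudo_cosine a b c D s.
  apply: rec_pcs => // i H1 H2; have Hi : (1 <= i <= D.-1)%N by lia.
  have [[Hxz Hzy] [Hzx Hxy] Hbf Hcf] := Hform i Hi.
  rewrite HsumR //; exact: (recS Hbf Hcf Hk Hxz Hzy Hzx Hxy Hsg1).
have pcsR : pseudo_cosine a b c D (rho s eps).
  apply: rec_pcs => // -[//|m] H1 H2; have Hi : (1 <= m.+1 <= D.-1)%N by lia.
  have [[Hxz Hzy] [Hzx Hxy] Hbf Hcf] := Hform m.+1 Hi.
  rewrite /= in Hxz Hzy Hzx Hxy Hbf Hcf.
  rewrite HsumR //; change (m.+1).-1 with m.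
  have E1 : rho s eps m.+1 = rho s eps m * ((s m - eps * s m.+1) / (s m.+1 - eps * s m)) by [].
  have E2 : rho s eps m.+2 = rho s eps m.+1 * ((s m.+1 - eps * s m.+2) / (s m.+2 - eps * s m.+1)) by [].
  have B1 := Bden m.+1 (ltnW H2); have B2 := Bden m.+2 H2.
  move: E1 E2 Hrho1; generalize (rho s eps m.+2) (rho s eps m.+1) (rho s eps m) (rho s eps 1).
  move=> r q p tau E1 E2 E3.
  exact: (recR Hbf Hcf Hk E1 E2 E3 Hxz Hzy Hzx Hxy Hsg1 B1 B2 Hse).
have pcsP : pseudo_cosine a b c D (fun i => s i * rho s eps i).
  apply: rec_pcs => //; first by rewrite Hs0 mul1r.
  move=> -[//|m] H1 H2; have Hi : (1 <= m.+1 <= D.-1)%N by lia.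
  have [[Hxz Hzy] [Hzx Hxy] Hbf Hcf] := Hform m.+1 Hi.
  rewrite /= in Hxz Hzy Hzx Hxy Hbf Hcf.
  rewrite HsumR //; change (m.+1).-1 with m.
  have E1 : rho s eps m.+1 = rho s eps m * ((s m - eps * s m.+1) / (s m.+1 - eps * s m)) by [].
  have E2 : rho s eps m.+2 = rho s eps m.+1 * ((s m.+1 - eps * s m.+2) / (s m.+2 - eps * s m.+1)) by [].
  have B1 := Bden m.+1 (ltnW H2); have B2 := Bden m.+2 H2.
  move: E1 E2 Hrho1; generalize (rho s eps m.+2) (rho s eps m.+1) (rho s eps m) (rho s eps 1).
  move=> r q p tau E1 E2 E3.
  exact: (recP Hbf Hcf Hk E1 E2 E3 Hxz Hzy Hzx Hxy Hsg1 B1 B2 Hse).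
have auxP : aux_param_pair D s (rho s eps) eps.
  move=> -[//|m] Hm; apply: auxL => //; exact: (Bden m.+1 Hm).
have ntR : rho s eps 1 != 1.
  rewrite Hrho1; apply/eqP => E.
  have E2 : 1 - eps * s 1%N = s 1%N - eps by rewrite -(divfK Hse (1 - eps * s 1%N)) E mul1r.
  have : (1 + eps) * (1 - s 1%N) == 0 by apply/eqP; rewrite -(to0 E2); ring.
  rewrite mulf_eq0 => /orP[/eqP H|/eqP H].
    by move: He2; rewrite (_ : eps = -1) ?eqxx //; apply/eqP; rewrite -subr_eq0 opprK addrC H.
  by move: Hsg1; rewrite -opprB H oppr0 eqxx.
have Hs1ne : s 1%N != 1 by rewrite -subr_eq0.
have [[H1t Ht1'] [Ht1 H1s] Hbf Hcf] := Hform 1%N HD1.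
have [N1 _ N3 N4] := nzs 1%N HD1.
rewrite /= Hs0 in H1t Ht1' Ht1 H1s Hbf Hcf N1 N3 N4.
split => //.
- apply/eqP => Ha1.
  have E := a1L Hbf Hcf Hk H1t Ht1' Ht1 H1s Hsg1.
  have HA := HsumR 1%N HD2; rewrite Ha1 in HA.
  rewrite -HA mul0r in E.
  have Hs1p : 1 + s 1%N != 0.
    have Hf : 1 - s 1%N * s 1%N = (1 - s 1%N) * (1 + s 1%N) by ring.
    by apply: contra N1 => /eqP H; rewrite Hf H mulr0.
  have He1' : 1 - eps != 0 by rewrite subr_eq0 eq_sym.
  move/eqP: E; rewrite eq_sym !mulNr oppr_eq0 !mulf_eq0.
  by rewrite (negbTE Hh0) (negbTE He1') (negbTE Hs1p) (negbTE Ht1) (negbTE N3).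
- split; last first.
    by move=> i Hi; have [[H _] _ _ _] := Hform i Hi; rewrite -subr_eq0.
  split; first by split.
  by exists (rho s eps); split => //; split.
- by exists (rho s eps); split => //; split.
- rewrite Hc1 /= in Hcf.
  exact: (hL Hcf N3 N4 Ht1 H1s).
Qed.
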